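(* Let $G$ be a finitely generated virtually nilpotent group (i.e. $G$ has a nilpotent normal subgroup of finite index), and let $\Phi$ be a uniformly continuous action of $G$ on a metric space $\Omega$. Let $U,V\subset\Omega$. Assume that there exists an element $g\in G$ such that the homeomorphism $f_g=\Phi(g,\cdot)$ is topologically Anosov with respect to the pair $(U,V)$. Then the action $\Phi$ is topologically Anosov with respect to the pair $(U,V)$.
   Context: Let $(\Omega,\mathrm{dist})$ be a metric space; $B(\delta,x)=\{y:\mathrm{dist}(x,y)<\delta\}$ and $B(\delta,U)=\bigcup_{x\in U}B(\delta,x)$. An action of a group $G$ is a map $\Phi:G\times\Omega\to\Omega$ such that each $f_g=\Phi(g,\cdot)$ is a homeomorphism of $\Omega$, $\Phi(e,x)=x$, and $\Phi(g_1g_2,x)=\Phi(g_1,\Phi(g_2,x))$. For a finitely generated $G$, the action is uniformly continuous if for some finite symmetric generating set $S$ (symmetric: $s\in S\Rightarrow s^{-1}\in S$) all maps $f_s$, $s\in S$, are uniformly continuous. Fix a finite symmetric generating set $S$ of $G$. For $d>0$, a family $\{y_g\}_{g\in G}\subset\Omega$ is a $d$-pseudotrajectory if $\mathrm{dist}(y_{sg},f_s(y_g))<d$ for all $s\in S$, $g\in G$. A uniformly continuous action has the shadowing property on $V\subset\Omega$ if for every $\varepsilon>0$ there is $d>0$ such that for every $d$-pseudotrajectory $\{y_g\}$ with all $y_g\in V$ there is $x_e\in\Omega$ with $\mathrm{dist}(y_g,f_g(x_e))<\varepsilon$ for all $g\in G$ (this property does not depend on the choice of $S$). The action is expansive on $U\subset\Omega$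 if there is $\Delta>0$ such that whenever $x_1,x_2\in U$ satisfy $\Phi(g,x_1),\Phi(g,x_2)\in U$ and $\mathrm{dist}(\Phi(g,x_1),\Phi(g,x_2))<\Delta$ for all $g\in G$, then $x_1=x_2$. The action is topologically Anosov with respect to $(U,V)$ if (TA1) there is $\gamma>0$ with $B(\gamma,V)\subset U$, (TA2) it has the shadowing property on $V$, and (TA3) it is expansive on $U$. A homeomorphism $f$ of $\Omega$ is said to have any of these properties if the $\mathbb Z$-action $(k,x)\mapsto f^k(x)$ (with generating set $\{1,-1\}$) has it. *)

(* Defs.v *)
From Stdlib Require Import Reals List ZArith.
Open Scope R_scope.
Set Implicit Arguments.

Record IsGroup (G : Type) (mul : G -> G -> G) (e : G) (inv : G -> G) : Prop := {
  grp_assoc : forall a b c, mul a (mul b c) = mul (mul a b) c;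
  grp_idl : forall a, mul e a = a;
  grp_idr : forall a, mul a e = a;
  grp_invl : forall a, mul (inv a) a = e;
  grp_invr : forall a, mul a (inv a) = e }.

Section GroupNotions.
Variables (G : Type) (mul : G -> G -> G) (e : G) (inv : G -> G).

Inductive gen (A : G -> Prop) : G -> Prop :=
| gen_e : gen A e
| gen_in : forall a, A a -> gen A a
| gen_mul : forall a b, gen A a -> gen A b -> gen A (mul a b)
| gen_inv : forall a, gen A a -> gen A (inv a).

Definition is_subgroup (N : G -> Prop) : Prop :=
  N e /\ (forall a b, N a -> N b -> N (mul a b)) /\ (forall a, N a -> N (inv a)).

Definition is_normal (N : G -> Prop) : Prop :=
  is_subgroup N /\ forall g n, N n -> N (mul (mul g n) (inv g)).

Definition finite_index (N : G -> Prop) : Prop :=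
  exists reps : list G, forall g, exists r n, In r reps /\ N n /\ g = mul r n.

Definition comm (a b : G) : G := mul (mul (inv a) (inv b)) (mul a b).

(* lower central series of the group N: gamma_1 = N, gamma_{i+1} = [N, gamma_i] *)
Fixpoint lcs (N : G -> Prop) (n : nat) : G -> Prop :=
  match n with
  | O => N
  | S m => gen (fun z => exists a b, N a /\ lcs N m b /\ z = comm a b)
  end.

Definition nilpotent_subgroup (N : G -> Prop) : Prop :=
  is_subgroup N /\ exists n, forall z, lcs N n z -> z = e.

Definition virtually_nilpotent : Prop :=
  exists N, is_normal N /\ finite_index N /\ nilpotent_subgroup N.

Definition sym_gen_set (S : list G) : Prop :=
  (forall s, In s S -> In (inv s) S) /\ (forall g, gen (fun s => In s S) g).

Definition finitely_generated : Prop := exists S : list G, forall g, gen (fun s => In s S) g.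

Definition zpow (g : G) (k : Z) : G :=
  match k with
  | Z0 => e
  | Zpos p => Nat.iter (Pos.to_nat p) (mul g) e
  | Zneg p => inv (Nat.iter (Pos.to_nat p) (mul g) e)
  end.
End GroupNotions.

Record IsMetric (X : Type) (dist : X -> X -> R) : Prop := {
  dist_nonneg : forall x y, 0 <= dist x y;
  dist_zero : forall x y, dist x y = 0 <-> x = y;
  dist_sym : forall x y, dist x y = dist y x;
  dist_tri : forall x y z, dist x z <= dist x y + dist y z }.

Section MetricNotions.
Variables (X : Type) (dist : X -> X -> R).

Definition mcontinuous (f : X -> X) : Prop :=
  forall x eps, 0 < eps -> exists delta, 0 < delta /\
    forall y, dist x y < delta -> dist (f x) (f y) < eps.

Definition unif_continuous (f : X -> X) : Prop :=
  forall eps, 0 < eps -> exists delta, 0 < delta /\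
    forall x y, dist x y < delta -> dist (f x) (f y) < eps.

Definition homeomorphism (f : X -> X) : Prop :=
  exists finv : X -> X, (forall x, finv (f x) = x) /\ (forall x, f (finv x) = x) /\
    mcontinuous f /\ mcontinuous finv.

Definition ball_set (delta : R) (U : X -> Prop) : X -> Prop :=
  fun y => exists x, U x /\ dist x y < delta.
End MetricNotions.

Section ActionNotions.
Variables (G : Type) (mul : G -> G -> G) (e : G) (inv : G -> G).
Variables (X : Type) (dist : X -> X -> R).

Definition is_action (Phi : G -> X -> X) : Prop :=
  (forall g, homeomorphism dist (Phi g)) /\ (forall x, Phi e x = x) /\
  (forall g1 g2 x, Phi (mul g1 g2) x = Phi g1 (Phi g2 x)).

Definition unif_continuous_action (Phi : G -> X -> X) : Prop :=
  exists S : list G, sym_gen_set mul e inv S /\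
    forall s, In s S -> unif_continuous dist (Phi s).

Definition pseudotrajectory (Phi : G -> X -> X) (S : list G) (d : R) (y : G -> X) : Prop :=
  forall s g, In s S -> dist (y (mul s g)) (Phi s (y g)) < d.

Definition shadowing_on (Phi : G -> X -> X) (S : list G) (V : X -> Prop) : Prop :=
  forall eps, 0 < eps -> exists d, 0 < d /\
    forall y : G -> X, pseudotrajectory Phi S d y -> (forall g, V (y g)) ->
      exists xe, forall g, dist (y g) (Phi g xe) < eps.

Definition expansive_on (Phi : G -> X -> X) (U : X -> Prop) : Prop :=
  exists Delta, 0 < Delta /\
    forall x1 x2, U x1 -> U x2 ->
      (forall g, U (Phi g x1) /\ U (Phi g x2) /\ dist (Phi g x1) (Phi g x2) < Delta) ->
      x1 = x2.

Definition top_anosov (Phi : G -> X -> X) (S : list G) (U V : X -> Prop) : Prop :=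
  (exists gamma, 0 < gamma /\ forall y, ball_set dist gamma V y -> U y) /\
  shadowing_on Phi S V /\ expansive_on Phi U.
End ActionNotions.

(* A homeomorphism f_g = Phi g is topologically Anosov w.r.t. (U,V) iff the
   Z-action k |-> f_g^k = Phi (g^k) with generating set {1,-1} is. *)
Definition homeo_top_anosov {G X : Type} (mul : G -> G -> G) (e : G) (inv : G -> G)
  (dist : X -> X -> R) (Phi : G -> X -> X) (g : G) (U V : X -> Prop) : Prop :=
  top_anosov Z.add dist (fun k x => Phi (zpow mul e inv g k) x) (1%Z :: (-1)%Z :: nil) U V.

(* Main.v *)
Require Import Defs.
From Stdlib Require Import Reals List ZArith Lia Lra Classical ClassicalEpsilon.
Set Implicit Arguments.
Open Scope R_scope.

Lemma g_inv_uniq G (mul : G -> G -> G) e inv (Hg : IsGroup mul e inv) x y :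
  mul x y = e -> y = inv x.
Proof.
  intros H. rewrite <- (grp_idl Hg y), <- (grp_invl Hg x), <- (grp_assoc Hg), H, (grp_idr Hg). reflexivity.
Qed.

Lemma g_invmul G (mul : G -> G -> G) e inv (Hg : IsGroup mul e inv) a b :
  inv (mul a b) = mul (inv b) (inv a).
Proof.
  symmetry; apply (g_inv_uniq Hg).
  rewrite <- (grp_assoc Hg), (grp_assoc Hg b), (grp_invr Hg), (grp_idl Hg), (grp_invr Hg). reflexivity.
Qed.

Lemma g_invinv G (mul : G -> G -> G) e inv (Hg : IsGroup mul e inv) a : inv (inv a) = a.
Proof. symmetry; apply (g_inv_uniq Hg). apply (grp_invl Hg). Qed.

Lemma g_inve G (mul : G -> G -> G) e inv (Hg : IsGroup mul e inv) : inv e = e.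
Proof. symmetry; apply (g_inv_uniq Hg). apply (grp_idl Hg). Qed.

Lemma g_c1 G (mul : G -> G -> G) e inv (Hg : IsGroup mul e inv) a b : mul a (mul (inv a) b) = b.
Proof. rewrite (grp_assoc Hg), (grp_invr Hg), (grp_idl Hg). reflexivity. Qed.
Lemma g_c2 G (mul : G -> G -> G) e inv (Hg : IsGroup mul e inv) a b : mul (inv a) (mul a b) = b.
Proof. rewrite (grp_assoc Hg), (grp_invl Hg), (grp_idl Hg). reflexivity. Qed.
Lemma g_assoc' G (mul : G -> G -> G) e inv (Hg : IsGroup mul e inv) a b c : mul (mul a b) c = mul a (mul b c).
Proof. symmetry; apply (grp_assoc Hg). Qed.

Ltac gn Hg := repeat progress (rewrite ?(g_assoc' Hg), ?(g_invmul Hg), ?(g_invinv Hg), ?(g_inve Hg),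
   ?(grp_idl Hg), ?(grp_idr Hg), ?(grp_invl Hg), ?(grp_invr Hg), ?(g_c1 Hg), ?(g_c2 Hg)).

Lemma test G (mul : G -> G -> G) e inv (Hg : IsGroup mul e inv) a b c :
  mul (inv (mul a (inv b))) (mul a c) = mul b c.
Proof. gn Hg. reflexivity. Qed.

Lemma pg_S' G (mul : G -> G -> G) e inv (Hg : IsGroup mul e inv) g n :
  Nat.iter (S n) (mul g) e = mul (Nat.iter n (mul g) e) g.
Proof.
  induction n; simpl.
  - rewrite (grp_idr Hg), (grp_idl Hg). reflexivity.
  - simpl in IHn. rewrite IHn, (grp_assoc Hg), IHn. reflexivity.
Qed.

Lemma zpow_nat G (mul : G -> G -> G) e inv (Hg : IsGroup mul e inv) g n :
  zpow mul e inv g (Z.of_nat n) = Nat.iter n (mul g) e.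
Proof.
  destruct n. reflexivity. simpl. rewrite SuccNat2Pos.id_succ. reflexivity.
Qed.

Lemma zpow_nnat G (mul : G -> G -> G) e inv (Hg : IsGroup mul e inv) g n :
  zpow mul e inv g (- Z.of_nat n) = inv (Nat.iter n (mul g) e).
Proof.
  destruct n. simpl. rewrite (g_inve Hg). reflexivity. simpl. rewrite SuccNat2Pos.id_succ. reflexivity.
Qed.

Lemma Z_nat_cases (k : Z) : exists n, k = Z.of_nat n \/ k = (- Z.of_nat n)%Z.
Proof. exists (Z.abs_nat k). lia. Qed.

Lemma zpow_succ G (mul : G -> G -> G) e inv (Hg : IsGroup mul e inv) g k :
  zpow mul e inv g (k + 1) = mul g (zpow mul e inv g k).
Proof.
  destruct (Z_nat_cases k) as [n [-> | ->]].
  - replace (Z.of_nat n + 1)%Z with (Z.of_nat (S n)) by lia.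
    rewrite !(zpow_nat Hg). reflexivity.
  - destruct n as [|n].
    + simpl. rewrite (grp_idr Hg). reflexivity.
    + replace (- Z.of_nat (S n) + 1)%Z with (- Z.of_nat n)%Z by lia.
      rewrite !(zpow_nnat Hg), (pg_S' Hg). gn Hg. reflexivity.
Qed.

Lemma zpow_pred G (mul : G -> G -> G) e inv (Hg : IsGroup mul e inv) g k :
  zpow mul e inv g (k - 1) = mul (inv g) (zpow mul e inv g k).
Proof.
  destruct (Z_nat_cases k) as [n [-> | ->]].
  - destruct n as [|n].
    + simpl. gn Hg. reflexivity.
    + replace (Z.of_nat (S n) - 1)%Z with (Z.of_nat n) by lia.
      rewrite !(zpow_nat Hg). simpl. gn Hg. reflexivity.
  - replace (- Z.of_nat n - 1)%Z with (- Z.of_nat (S n))%Z by lia.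
    rewrite !(zpow_nnat Hg), (pg_S' Hg). gn Hg. reflexivity.
Qed.

Lemma zpow_add G (mul : G -> G -> G) e inv (Hg : IsGroup mul e inv) g a b :
  zpow mul e inv g (a + b) = mul (zpow mul e inv g a) (zpow mul e inv g b).
Proof.
  induction a using Z.peano_ind.
  - simpl. rewrite (grp_idl Hg). reflexivity.
  - replace (Z.succ a + b)%Z with ((a + b) + 1)%Z by lia. replace (Z.succ a) with (a + 1)%Z by lia.
    rewrite !(zpow_succ Hg), IHa, (grp_assoc Hg). reflexivity.
  - replace (Z.pred a + b)%Z with ((a + b) - 1)%Z by lia. replace (Z.pred a) with (a - 1)%Z by lia.
    rewrite !(zpow_pred Hg), IHa, (grp_assoc Hg). reflexivity.
Qed.

Lemma zpow_0 G (mul : G -> G -> G) e inv g : zpow mul e inv g 0 = e.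
Proof. reflexivity. Qed.

Lemma d_refl X (dist : X -> X -> R) (Hd : IsMetric dist) x : dist x x = 0.
Proof. apply (Defs.dist_zero Hd). reflexivity. Qed.

Lemma uc_comp X (dist : X -> X -> R) f h :
  unif_continuous dist f -> unif_continuous dist h -> unif_continuous dist (fun x => f (h x)).
Proof.
  intros Hf Hh eps He. destruct (Hf eps He) as [d1 [Hd1 H1]]. destruct (Hh d1 Hd1) as [d2 [Hd2 H2]].
  exists d2. split; auto.
Qed.

Lemma uc_ext X (dist : X -> X -> R) f h :
  (forall x, f x = h x) -> unif_continuous dist f -> unif_continuous dist h.
Proof.
  intros E Hf eps He. destruct (Hf eps He) as [d1 [Hd1 H1]]. exists d1. split; auto.
  intros x y Hxy. rewrite <- !E. auto.
Qed.

Lemma uc_id X (dist : X -> X -> R) : unif_continuous dist (fun x => x).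
Proof. intros eps He. exists eps. split; auto. Qed.

Lemma uc_all G (mul : G -> G -> G) e inv (Hg : IsGroup mul e inv) X (dist : X -> X -> R)
  (Phi : G -> X -> X) (Ha : is_action mul e dist Phi) (S : list G) :
  (forall s, In s S -> In (inv s) S) -> (forall s, In s S -> unif_continuous dist (Phi s)) ->
  forall a, gen mul e inv (fun s => In s S) a ->
  unif_continuous dist (Phi a) /\ unif_continuous dist (Phi (inv a)).
Proof.
  destruct Ha as [_ [He Hm]]. intros Hsym Huc a Ga. induction Ga.
  - rewrite (g_inve Hg). split; apply uc_ext with (fun x => x); auto using uc_id.
  - split; auto.
  - destruct IHGa1, IHGa2. rewrite (g_invmul Hg). split.
    + apply uc_ext with (fun x => Phi a (Phi b x)); auto. apply uc_comp; auto.
    + apply uc_ext with (fun x => Phi (inv b) (Phi (inv a) x)); auto. apply uc_comp; auto.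
  - rewrite (g_invinv Hg). tauto.
Qed.

Definition Qprop G (mul : G -> G -> G) X (dist : X -> X -> R) (Phi : G -> X -> X) (S : list G) a :=
  forall eta, 0 < eta -> exists d, 0 < d /\ forall y, pseudotrajectory mul dist Phi S d y ->
    forall w, dist (y (mul a w)) (Phi a (y w)) < eta.

Lemma pt_mono G (mul : G -> G -> G) X (dist : X -> X -> R) (Phi : G -> X -> X) S d d' y :
  d <= d' -> pseudotrajectory mul dist Phi S d y -> pseudotrajectory mul dist Phi S d' y.
Proof. intros Hdd H s g Hs. specialize (H s g Hs). lra. Qed.

Lemma q_all G (mul : G -> G -> G) e inv (Hg : IsGroup mul e inv) X (dist : X -> X -> R)
  (Hd : IsMetric dist) (Phi : G -> X -> X) (Ha : is_action mul e dist Phi) (S : list G) :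
  (forall a, unif_continuous dist (Phi a)) ->
  forall a, gen mul e inv (fun s => In s S) a -> Qprop mul dist Phi S a.
Proof.
  intros Huc a Ga. pose proof Ha as [_ [He Hm]]. induction Ga; intros eta Heta.
  - exists 1. split. lra. intros y _ w. rewrite (grp_idl Hg), He, (d_refl Hd). auto.
  - exists eta. split; auto.
  - destruct (Huc a (eta/2)) as [d1 [Hd1 H1]]. lra.
    destruct (IHGa1 (eta/2)) as [da [Hda Qa]]. lra.
    destruct (IHGa2 d1 Hd1) as [db [Hdb Qb]].
    exists (Rmin da db). split. apply Rmin_pos; auto.
    intros y Hy w. rewrite Hm, (g_assoc' Hg).
    pose proof (Qa y (pt_mono (Rmin_l da db) Hy) (mul b w)).
    pose proof (H1 _ _ (Qb y (pt_mono (Rmin_r da db) Hy) w)).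
    pose proof (Defs.dist_tri Hd (y (mul a (mul b w))) (Phi a (y (mul b w))) (Phi a (Phi b (y w)))). lra.
  - destruct (Huc (inv a) eta Heta) as [d1 [Hd1 H1]].
    destruct (IHGa d1 Hd1) as [da [Hda Qa]]. exists da. split; auto.
    intros y Hy w.
    pose proof (H1 _ _ (Qa y Hy (mul (inv a) w))).
    rewrite (g_c1 Hg), <- Hm, (grp_invl Hg), He in H. rewrite (Defs.dist_sym Hd). auto.
Qed.

Lemma ucl G X (dist : X -> X -> R) (Phi : G -> X -> X) :
  (forall a, unif_continuous dist (Phi a)) ->
  forall L eta, 0 < eta -> exists del, 0 < del /\ forall b, In b L -> forall x y, dist x y < del ->
    dist (Phi b x) (Phi b y) < eta.
Proof.
  intros Huc L eta He. induction L as [|a L IH].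
  - exists 1. split. lra. intros b [].
  - destruct IH as [d1 [Hd1 H1]]. destruct (Huc a eta He) as [d2 [Hd2 H2]].
    exists (Rmin d1 d2). split. apply Rmin_pos; auto.
    intros b [<-|Hb] x y Hxy.
    + apply H2. pose proof (Rmin_r d1 d2). lra.
    + apply H1; auto. pose proof (Rmin_l d1 d2). lra.
Qed.

Lemma ql G (mul : G -> G -> G) X (dist : X -> X -> R) (Phi : G -> X -> X) S :
  (forall a, Qprop mul dist Phi S a) ->
  forall L eta, 0 < eta -> exists d, 0 < d /\ forall y, pseudotrajectory mul dist Phi S d y ->
    forall b, In b L -> forall w, dist (y (mul b w)) (Phi b (y w)) < eta.
Proof.
  intros Hq L eta He. induction L as [|a L IH].
  - exists 1. split. lra. intros y _ b [].
  - destruct IH as [d1 [Hd1 H1]]. destruct (Hq a eta He) as [d2 [Hd2 H2]].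
    exists (Rmin d1 d2). split. apply Rmin_pos; auto.
    intros y Hy b [<-|Hb] w.
    + apply H2. eapply pt_mono; [|exact Hy]. apply Rmin_r.
    + apply H1; auto. eapply pt_mono; [|exact Hy]. apply Rmin_l.
Qed.

Lemma pigeon G (f : nat -> G) (reps : list G) :
  (forall i, In (f i) reps) -> exists i j, (i < j)%nat /\ f i = f j.
Proof.
  intros Hin. apply NNPP. intros Hn.
  assert (ND : NoDup (map f (seq 0 (S (length reps))))).
  { apply (NoDup_nth _ (f 0%nat)). rewrite length_map, length_seq. intros i j Hi Hj E.
    rewrite !map_nth, !seq_nth in E by auto. simpl in E.
    destruct (Nat.lt_total i j) as [H|[H|H]]; auto; exfalso; apply Hn; eauto. }
  apply NoDup_incl_length with (l' := reps) in ND.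
  - rewrite length_map, length_seq in ND. lia.
  - intros x Hx. apply in_map_iff in Hx. destruct Hx as [i [<- _]]. auto.
Qed.

Lemma zpow_neg G (mul : G -> G -> G) e inv (Hg : IsGroup mul e inv) g k :
  zpow mul e inv g (- k) = inv (zpow mul e inv g k).
Proof.
  apply (g_inv_uniq Hg). rewrite <- (zpow_add Hg). replace (k + - k)%Z with 0%Z by lia. reflexivity.
Qed.

Lemma fi_power G (mul : G -> G -> G) e inv (Hg : IsGroup mul e inv) (N : G -> Prop) g :
  is_subgroup mul e inv N -> finite_index mul N ->
  exists m, (0 < m)%nat /\ N (zpow mul e inv g (Z.of_nat m)).
Proof.
  intros [HNe [HNm HNi]] [reps Hr].
  assert (Hc : forall i : nat, exists r, In r reps /\ exists n, N n /\ zpow mul e inv g (Z.of_nat i) = mul r n).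
  { intros i. destruct (Hr (zpow mul e inv g (Z.of_nat i))) as [r [n [H1 [H2 H3]]]]. eauto. }
  set (f := fun i => proj1_sig (constructive_indefinite_description _ (Hc i))).
  assert (Hf : forall i, In (f i) reps /\ exists n, N n /\ zpow mul e inv g (Z.of_nat i) = mul (f i) n).
  { intros i. unfold f. destruct (constructive_indefinite_description _ (Hc i)). simpl. auto. }
  destruct (pigeon f reps) as [i [j [Hij E]]]. { intros i; apply Hf. }
  exists (j - i)%nat. split. lia.
  destruct (Hf i) as [_ [ni [Hni Ei]]]. destruct (Hf j) as [_ [nj [Hnj Ej]]].
  replace (Z.of_nat (j - i)) with (- Z.of_nat i + Z.of_nat j)%Z by lia.
  rewrite (zpow_add Hg), (zpow_neg Hg), Ei, Ej, E. gn Hg. auto.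
Qed.

Lemma aseq_lcs G (mul : G -> G -> G) e inv (Hg : IsGroup mul e inv) (N : G -> Prop) t s :
  is_normal mul e inv N -> N t ->
  forall i, lcs mul e inv N i (Nat.iter (S i) (fun x => comm mul inv t x) s).
Proof.
  intros [[HNe [HNm HNi]] Hnor] Ht i. induction i.
  - simpl. unfold comm.
    replace (mul (mul (inv t) (inv s)) (mul t s)) with
      (mul (inv t) (mul (mul (inv s) t) (inv (inv s)))) by (gn Hg; reflexivity).
    apply HNm. apply HNi; auto. apply Hnor; auto.
  - simpl. apply gen_in. exists t, (Nat.iter (S i) (fun x => comm mul inv t x) s). simpl. auto.
Qed.

Lemma main_shadow G (mul : G -> G -> G) e inv (Hg : IsGroup mul e inv) X (dist : X -> X -> R)
  (Hd : IsMetric dist) (Phi : G -> X -> X) (Ha : is_action mul e dist Phi) (SS : list G) g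
  (U V : X -> Prop) (N : G -> Prop) (m n : nat)
  (Huc : forall a, unif_continuous dist (Phi a)) (Hq : forall a, Qprop mul dist Phi SS a)
  (HS : forall a, gen mul e inv (fun s => In s SS) a)
  (HN : is_normal mul e inv N) (Hm : N (zpow mul e inv g (Z.of_nat m))) (Hm0 : (0 < m)%nat)
  (Hn : forall z, lcs mul e inv N n z -> z = e)
  gam (Hgam : 0 < gam) (HU : forall y, ball_set dist gam V y -> U y)
  Del (HDel : 0 < Del)
  (HE : forall x1 x2, U x1 -> U x2 -> (forall k : Z, U (Phi (zpow mul e inv g k) x1) /\
        U (Phi (zpow mul e inv g k) x2) /\
        dist (Phi (zpow mul e inv g k) x1) (Phi (zpow mul e inv g k) x2) < Del) -> x1 = x2)
  (HZ : shadowing_on Z.add dist (fun k x => Phi (zpow mul e inv g k) x) (1%Z :: (-1)%Z :: nil) V) :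
  shadowing_on mul dist Phi SS V.
Proof.
  pose proof Ha as [_ [He Hmul]].
  set (zp := zpow mul e inv g).
  assert (Hzadd : forall a b, zp (a + b)%Z = mul (zp a) (zp b)) by (intros; apply (zpow_add Hg)).
  intros eps Heps.
  set (e0 := Rmin eps (Rmin gam Del) / 4).
  assert (He0 : 0 < e0 /\ e0 < eps /\ 4 * e0 <= gam /\ 4 * e0 <= Del).
  { unfold e0. pose proof (Rmin_l eps (Rmin gam Del)). pose proof (Rmin_r eps (Rmin gam Del)).
    pose proof (Rmin_l gam Del). pose proof (Rmin_r gam Del).
    assert (0 < Rmin eps (Rmin gam Del)) by (repeat apply Rmin_pos; auto). lra. }
  destruct He0 as (He0p & He0e & He0g & He0D).
  set (t := zp (Z.of_nat m)).
  set (aseq := fun s i => Nat.iter i (fun x => comm mul inv t x) s).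
  set (F := flat_map (fun s => flat_map (fun r => map (fun i => mul (zp (Z.of_nat r)) (aseq s i))
              (seq 0 (S n))) (seq 0 m)) SS).
  destruct (ucl Phi Huc F He0p) as [del [Hdel HF]].
  set (e1 := Rmin e0 del).
  assert (He1 : 0 < e1 /\ e1 <= e0 /\ e1 <= del).
  { unfold e1. split. apply Rmin_pos; lra. split. apply Rmin_l. apply Rmin_r. }
  destruct He1 as (He1p & He1a & He1b).
  destruct (HZ e1 He1p) as [d1 [Hd1 HZ1]].
  assert (Hed : 0 < Rmin e0 d1) by (apply Rmin_pos; lra).
  destruct (ql Hq (zp 1%Z :: zp (-1)%Z :: F) Hed) as [d [Hdp HQ]].
  exists d. split; auto. intros y Hy HV.
  set (Sh := fun h p => forall k, dist (y (mul (zp k) h)) (Phi (zp k) p) < e1).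
  assert (Hex : forall h, exists p, Sh h p).
  { intros h. destruct (HZ1 (fun k => y (mul (zp k) h))) as [p Hp].
    - intros s k Hs. simpl. rewrite Hzadd, (g_assoc' Hg).
      assert (Hin : In (zp s) (zp 1%Z :: zp (-1)%Z :: F)) by (destruct Hs as [<-|[<-|[]]]; simpl; auto).
      pose proof (HQ y Hy _ Hin (mul (zp k) h)). pose proof (Rmin_r e0 d1). unfold zp in *. lra.
    - intros k; apply HV.
    - exists p. intros k. apply Hp. }
  assert (Huniq : forall (z : Z -> X) p q, (forall k, V (z k)) ->
     (forall k, dist (z k) (Phi (zp k) p) < 2*e0) -> (forall k, dist (z k) (Phi (zp k) q) < 2*e0) -> p = q).
  { intros z p q HVz Hp Hq'. apply HE.
    - apply HU. exists (z 0%Z). split; auto. specialize (Hp 0%Z). unfold zp in Hp. simpl in Hp. rewrite He in Hp. lra.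
    - apply HU. exists (z 0%Z). split; auto. specialize (Hq' 0%Z). unfold zp in Hq'. simpl in Hq'. rewrite He in Hq'. lra.
    - intros k. specialize (Hp k). specialize (Hq' k). split; [|split].
      + apply HU. exists (z k). split; auto. unfold zp in *. lra.
      + apply HU. exists (z k). split; auto. unfold zp in *. lra.
      + pose proof (Defs.dist_tri Hd (Phi (zp k) p) (z k) (Phi (zp k) q)).
        pose proof (Defs.dist_sym Hd (Phi (zp k) p) (z k)). unfold zp in *. lra. }
  set (P := fun a => forall h p, Sh h p -> Sh (mul a h) (Phi a p)).
  assert (Pe : P e).
  { intros h p Hp. rewrite (grp_idl Hg), He. auto. }
  assert (Pmul : forall a b, P a -> P b -> P (mul a b)).
  { intros a b Pa Pb h p Hp. rewrite (g_assoc' Hg). intros k. rewrite Hmul. apply Pa, Pb, Hp. }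
  assert (Pinv : forall a, P a -> P (inv a)).
  { intros a Pa h p Hp. destruct (Hex (mul (inv a) h)) as [q Hq'].
    pose proof (Pa _ _ Hq') as H1. rewrite (g_c1 Hg) in H1.
    assert (E : Phi a q = p).
    { apply (Huniq (fun k => y (mul (zp k) h))). intros; apply HV.
      - intros k. specialize (H1 k). lra.
      - intros k. specialize (Hp k). lra. }
    rewrite <- E, <- Hmul, (grp_invl Hg), He. auto. }
  assert (Pzp : forall j, P (zp j)).
  { intros j h p Hp k. rewrite <- Hmul, (grp_assoc Hg), <- !Hzadd. apply Hp. }
  assert (PB : forall a, (forall k, exists b j c, In b F /\ P c /\ mul (zp k) a = mul b (mul (zp j) c)) -> P a).
  { intros a HB h p Hp. destruct (Hex (mul a h)) as [q Hq'].
    assert (E : Phi a q = q -> True) by auto.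
    assert (E2 : Phi a p = q).
    { apply (Huniq (fun k => y (mul (zp k) (mul a h)))). intros; apply HV.
      - intros k. destruct (HB k) as [b [j [c [Hb [Pc Ek]]]]]. simpl. rewrite <- Hmul, Ek, !Hmul.
        pose proof (Pc h p Hp j) as H1.
        assert (H1' : dist (y (mul (zp j) (mul c h))) (Phi (zp j) (Phi c p)) < del) by lra.
        pose proof (HF b Hb _ _ H1') as H2.
        assert (Hin : In b (zp 1%Z :: zp (-1)%Z :: F)) by (simpl; auto).
        pose proof (HQ y Hy b Hin (mul (zp j) (mul c h))) as H3.
        replace (mul (zp k) (mul a h)) with (mul b (mul (zp j) (mul c h)))
          by (rewrite (grp_assoc Hg (zp k)), Ek, !(g_assoc' Hg); reflexivity).
        pose proof (Rmin_l e0 d1).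
        pose proof (Defs.dist_tri Hd (y (mul b (mul (zp j) (mul c h)))) (Phi b (y (mul (zp j) (mul c h))))
           (Phi b (Phi (zp j) (Phi c p)))). lra.
      - intros k. specialize (Hq' k). lra. }
    rewrite E2. auto. }
  assert (Hlast : forall s, aseq s (S n) = e).
  { intros s. apply Hn. apply (aseq_lcs Hg); auto. }
  assert (Pt : P t) by apply Pzp.
  assert (Hstep : forall s i, In s SS -> (i <= n)%nat -> P (aseq s (S i)) -> P (aseq s i)).
  { intros s i Hs Hi Pn. set (a := aseq s i).
    assert (Pc1 : P (comm mul inv t a)) by exact Pn.
    set (dq := fun q => mul (inv (zp (Z.of_nat m * q)%Z)) (mul (inv a) (mul (zp (Z.of_nat m * q)%Z) a))).
    assert (Hdq : forall q, P (dq q)).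
    { intros q; induction q using Z.peano_ind.
      - replace (dq 0%Z) with e; auto. unfold dq. rewrite Z.mul_0_r. unfold zp. simpl. gn Hg. reflexivity.
      - replace (dq (Z.succ q)) with (mul (mul (inv t) (mul (dq q) t)) (comm mul inv t a)).
        + apply Pmul; [apply Pmul; [apply Pinv; exact Pt| apply Pmul; [exact IHq| exact Pt]] | exact Pc1].
        + unfold dq, comm. replace (Z.of_nat m * Z.succ q)%Z with (Z.of_nat m * q + Z.of_nat m)%Z by lia.
          rewrite Hzadd. fold t. gn Hg. reflexivity.
      - replace (dq (Z.pred q)) with (mul (mul t (mul (dq q) (inv t))) (inv (mul t (mul (comm mul inv t a) (inv t))))).
        + apply Pmul; [apply Pmul; [exact Pt| apply Pmul; [exact IHq| apply Pinv; exact Pt]] | apply Pinv; apply Pmul; [exact Pt| apply Pmul; [exact Pc1| apply Pinv; exact Pt]]].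
        + unfold dq, comm. replace (Z.of_nat m * Z.pred q)%Z with (Z.of_nat m * q + - Z.of_nat m)%Z by lia.
          rewrite Hzadd. replace (zp (- Z.of_nat m)%Z) with (inv t) by (symmetry; apply (zpow_neg Hg)). gn Hg. reflexivity. }
    apply PB. intros k.
    assert (Hmz : (0 < Z.of_nat m)%Z) by lia.
    pose proof (Z.mod_pos_bound k (Z.of_nat m) Hmz) as Hb.
    exists (mul (zp (Z.of_nat (Z.to_nat (k mod Z.of_nat m)))) a), (Z.of_nat m * (k / Z.of_nat m))%Z,
      (dq (k / Z.of_nat m)%Z).
    split; [|split].
    - unfold F. apply in_flat_map. exists s. split; auto. apply in_flat_map. exists (Z.to_nat (k mod Z.of_nat m)).
      split. apply in_seq. lia. apply in_map_iff. exists i. split; auto. apply in_seq. lia.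
    - apply Hdq.
    - rewrite Z2Nat.id by lia.
      replace (zp k) with (zp (k mod Z.of_nat m + Z.of_nat m * (k / Z.of_nat m))%Z)
        by (f_equal; rewrite Z.add_comm; symmetry; apply Z.div_mod; lia).
      rewrite Hzadd. unfold dq. gn Hg. reflexivity. }
  assert (Ps : forall s, In s SS -> P s).
  { intros s Hs. assert (H : forall j, (j <= S n)%nat -> P (aseq s (S n - j)%nat)).
    { induction j; intros Hj.
      - rewrite Nat.sub_0_r, Hlast. auto.
      - replace (S n - j)%nat with (S (S n - S j)) in IHj by lia.
        apply Hstep; auto; try lia. apply IHj; lia. }
    specialize (H (S n) (le_n _)). rewrite Nat.sub_diag in H. exact H. }
  assert (Pall : forall a, P a).
  { intros a. induction (HS a); auto. }
  destruct (Hex e) as [p Hp]. exists p. intros h.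
  pose proof (Pall h e p Hp 0%Z) as H. unfold zp in H. simpl in H.
  rewrite (grp_idl Hg), (grp_idr Hg), He in H. lra.
Qed.

Theorem theorem1 (G : Type) (mul : G -> G -> G) (e : G) (inv : G -> G)
  (X : Type) (dist : X -> X -> R) (Phi : G -> X -> X) (S : list G)
  (U V : X -> Prop) (g : G) :
  IsGroup mul e inv ->
  IsMetric dist ->
  finitely_generated mul e inv ->
  virtually_nilpotent mul e inv ->
  is_action mul e dist Phi ->
  unif_continuous_action mul e inv dist Phi ->
  sym_gen_set mul e inv S ->
  homeo_top_anosov mul e inv dist Phi g U V ->
  top_anosov mul dist Phi S U V.
Proof.
  intros Hg Hd _ [N [HN [HFI [HNs [n Hn]]]]] Ha [S' [[Hsym' Hgen'] Huc']] [Hsym Hgen]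
    [[gam [Hgam HU]] [HZ [Del [HDel HE]]]].
  assert (Huc : forall a, unif_continuous dist (Phi a)).
  { intros a. apply (uc_all Hg Ha S' Hsym' Huc' (Hgen' a)). }
  assert (Hq : forall a, Qprop mul dist Phi S a).
  { intros a. apply (q_all Hg Hd Ha S Huc (Hgen a)). }
  destruct (fi_power Hg g (proj1 HN) HFI) as [m [Hm0 Hm]].
  split; [|split].
  - exists gam. auto.
  - eapply main_shadow with (N := N) (m := m) (n := n) (gam := gam) (Del := Del); eauto.
  - exists Del. split; [exact HDel|]. intros x1 x2 H1 H2 Hall. apply HE; auto.
Qed.
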